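(* Let $X$ be a robust $X$-set parameter and let $G$ be a graph. If $X(K_1)=0$ or $G$ has no isolated vertices, then the automorphism group of $\mathfrak{X}(G)$ is generated by $\{\nu_R: R\subseteq V(G)\text{ is } X\text{-irrelevant}\}\cup M_X(G)$, where each $\psi\in M_X(G)$ acts on $\mathfrak{X}(G)$ by $S\mapsto\psi(S)$.
   Context: All graphs are finite, simple, undirected, with nonempty vertex set. A super $X$-set parameter $X$ assigns to each graph $G$ a family of subsets of $V(G)$, called the $X$-sets of $G$, such that: every graph isomorphism maps $X$-sets to $X$-sets; every graph has at least one $X$-set; and (Superset) if $S$ is an $X$-set of $G$ and $S\subseteq S'\subseteq V(G)$, then $S'$ is an $X$-set of $G$. $X(G)$ is the minimum cardinality of an $X$-set. A robust $X$-set parameter is a super $X$-set parameter that additionally satisfies: ($(n-1)$-set) if $G$ is connected of order $n\ge2$, every set of $n-1$ vertices is an $X$-set; (Component consistency) if $G_1,\dots,G_k$ are the connected components of $G$, then $S\subseteq V(G)$ is an $X$-set of $G$ iff $S\cap V(G_i)$ is an $X$-set of $G_i$ for all $i$. The $X$-TAR graph $\mathfrak{X}(G)$ has as vertices the $X$-sets of $G$, with $S_1S_2$ an edge iff $|S_1\ominus S_2|=1$. A vertex is $X$-irrelevant if it lies in no minimal (w.r.t. inclusion) $X$-set; a set is $X$-irrelevant if all its vertices are. For $R\subseteq V(G)$, $\nu_R(S)=S\ominus R$ (symmetric difference). $M_X(G)$ is the set of bijections $\psi:V(G)\to V(G)$ that send minimal $X$-sets of $G$ to minimal $X$-sets of $G$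 of the same size. *)

(* Defs.v *)
From mathcomp Require Import all_boot all_fingroup.
Set Implicit Arguments. Unset Strict Implicit. Unset Printing Implicit Defensive.

Definition simple_graph (T : finType) (e : rel T) : Prop :=
  0 < #|T| /\ symmetric e /\ irreflexive e.

(* A set parameter assigns to each graph the (boolean) family of its X-sets. *)
Definition Xparam := forall T : finType, rel T -> pred {set T}.

Definition super_param (X : Xparam) : Prop :=
  (forall (T1 T2 : finType) (e1 : rel T1) (e2 : rel T2) (f : T1 -> T2),
      simple_graph e1 -> simple_graph e2 -> bijective f ->
      (forall x y, e2 (f x) (f y) = e1 x y) ->
      forall S : {set T1}, X T1 e1 S -> X T2 e2 (f @: S))
  /\
  (forall (T : finType) (e : rel T), simple_graph e -> exists S, X T e S)
  /\
  (forall (T : finType) (e : rel T), simple_graph e ->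
      forall S S' : {set T}, S \subset S' -> X T e S -> X T e S').

Definition connected_graph (T : finType) (e : rel T) : Prop :=
  forall x y, connect e x y.

Definition component (T : finType) (e : rel T) (C : {set T}) : Prop :=
  exists x, C = [set y | connect e x y].

Definition ind_type (T : finType) (C : {set T}) := {x : T | x \in C}.
Definition ind_rel (T : finType) (e : rel T) (C : {set T}) : rel (@ind_type T C) :=
  fun x y => e (val x) (val y).
Definition ind_set (T : finType) (C S : {set T}) : {set @ind_type T C} :=
  [set x : @ind_type T C | val x \in S].

Definition robust_param (X : Xparam) : Prop :=
  super_param X
  /\ (forall (T : finType) (e : rel T), simple_graph e -> connected_graph e ->
        2 <= #|T| -> forall S : {set T}, #|S| = #|T| - 1 -> X T e S)
  /\ (forall (T : finType) (e : rel T), simple_graph e -> forall S : {set T},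
        X T e S <-> (forall C, component e C ->
                       X (@ind_type T C) (@ind_rel T e C) (@ind_set T C S))).

Definition Xnum (X : Xparam) (T : finType) (e : rel T) : nat :=
  \big[minn/#|T|]_(S : {set T} | X T e S) #|S|.

Definition K1rel : rel unit := fun _ _ => false.

Definition no_isolated (T : finType) (e : rel T) : Prop :=
  forall v, exists u, e v u.

Definition symdiff (T : finType) (A B : {set T}) : {set T} :=
  (A :\: B) :|: (B :\: A).

Definition minX (X : Xparam) (T : finType) (e : rel T) (S : {set T}) : bool :=
  minset (X T e) S.
Definition irrelevant_vertex (X : Xparam) (T : finType) (e : rel T) (v : T) : bool :=
  [forall S : {set T}, minX X e S ==> (v \notin S)].
Definition irrelevant_set (X : Xparam) (T : finType) (e : rel T) (R : {set T}) : bool :=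
  [forall v in R, irrelevant_vertex X e v].

Definition MX (X : Xparam) (T : finType) (e : rel T) : {set {perm T}} :=
  [set q : {perm T} | [forall S : {set T},
      minX X e S ==> (minX X e (q @: S) && (#|q @: S| == #|S|))]].

(* The X-TAR graph: vertices are X-sets, adjacency = symmetric difference of size 1 *)
Definition TARv (X : Xparam) (T : finType) (e : rel T) := {S : {set T} | X T e S}.
Definition tar_adj (X : Xparam) (T : finType) (e : rel T) (a b : TARv X e) : bool :=
  #|symdiff (val a) (val b)| == 1.

Definition TARaut (X : Xparam) (T : finType) (e : rel T) : {set {perm TARv X e}} :=
  [set p : {perm TARv X e} | [forall a, forall b, tar_adj (p a) (p b) == tar_adj a b]].

Definition TARgens (X : Xparam) (T : finType) (e : rel T) : {set {perm TARv X e}} :=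
  [set p : {perm TARv X e} |
     [exists R : {set T}, irrelevant_set X e R &&
        [forall a, val (p a) == symdiff (val a) R]]
  || [exists q : {perm T}, (q \in MX X e) &&
        [forall a, val (p a) == q @: val a]]].

(* Main.v *)
Require Import Defs.
From mathcomp Require Import all_boot all_fingroup.
Set Implicit Arguments. Unset Strict Implicit. Unset Printing Implicit Defensive.

Section Basic.
Variable T : finType.
Implicit Types A B C : {set T}.

Lemma in_sd A B x : (x \in symdiff A B) = ((x \in A) != (x \in B)).
Proof. by rewrite /symdiff !inE; case: (x \in A); case: (x \in B). Qed.

Lemma sd0P A B : (symdiff A B == set0) = (A == B).
Proof.
apply/eqP/eqP => [H|->]; last by apply/setP=> x; rewrite in_sd inE eqxx.
apply/setP=> x; move/setP: H => /(_ x); rewrite in_sd inE.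
by case: (x \in A); case: (x \in B).
Qed.

Lemma sd_tri A B C : #|symdiff A B| <= #|symdiff A C| + #|symdiff C B|.
Proof.
apply: leq_trans (leq_card_setU _ _).
apply: subset_leq_card; apply/subsetP=> x; rewrite in_setU !in_sd.
by case: (x \in A); case: (x \in B); case: (x \in C).
Qed.

Lemma mem_qim (q : {perm T}) (S : {set T}) x : (x \in q @: S) = (q^-1%g x \in S).
Proof.
apply/imsetP/idP => [[y yS ->]|H]; first by rewrite permK.
by exists (q^-1%g x); rewrite ?permKV.
Qed.


Lemma sdK A C : symdiff (symdiff A C) C = A.
Proof. by apply/setP=> x; rewrite !in_sd; case: (x \in A); case: (x \in C). Qed.
Lemma sd3 A B C : symdiff (symdiff A C) (symdiff B C) = symdiff A B.
Proof. by apply/setP=> x; rewrite !in_sd; case: (x \in A); case: (x \in B); case: (x \in C). Qed.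
Lemma sdT A : symdiff A setT = ~: A.
Proof. by apply/setP=> x; rewrite in_sd !inE; case: (x \in A). Qed.
Lemma sdinj A B C : symdiff A C = symdiff B C -> A = B.
Proof. by move=> H; rewrite -(sdK A C) H sdK. Qed.
Lemma sd_qim (q : {perm T}) A B : symdiff (q @: A) (q @: B) = q @: (symdiff A B).
Proof. by apply/setP=> x; rewrite !(in_sd, mem_qim). Qed.
End Basic.

Section Main.
Variable X : Xparam.
Variable T : finType.
Variable e : rel T.
Hypothesis HX : super_param X.
Hypothesis Hg : simple_graph e.
Local Notation U := (@X T e).
Implicit Types S A B C M R : {set T}.

Lemma up S S' : S \subset S' -> U S -> U S'.
Proof. by case: HX => _ [_ H] ?; apply: H. Qed.

Lemma UT : U setT.
Proof. case: HX => _ [H _]; case: (H T e Hg) => S HS; exact: up (subsetT S) HS. Qed.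

Lemma conj1 R S : irrelevant_set X e R -> U S -> U (symdiff S R).
Proof.
move=> /forall_inP HR HS; case: (minset_exists HS) => M HM MS.
apply: (up _ (minsetP HM).1); apply/subsetP=> x xM; rewrite in_sd (subsetP MS) //=.
apply/negP=> /HR /forallP /(_ M) /implyP /(_ HM); by rewrite xM.
Qed.

Lemma conj2 (q : {perm T}) S : q \in MX X e -> U S -> U (q @: S).
Proof.
rewrite inE => /forallP Hq HS; case: (minset_exists HS) => M HM MS.
move: (Hq M) => /implyP /(_ HM) /andP [HqM _].
exact: (up (imsetS _ MS) (minsetP HqM).1).
Qed.

Lemma neighbour A B : U A -> U B -> A != B ->
  exists C, [/\ U C, #|symdiff A C| = 1 & (#|symdiff C B|).+1 = #|symdiff A B| ].
Proof.
move=> UA UB nAB.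
have Hc : forall x, x \in symdiff A B -> symdiff (symdiff A [set x]) B = symdiff A B :\ x.
  move=> x Hx; apply/setP=> y; rewrite !(in_sd, inE).
  case: (y =P x) => [->|_] //=; move: Hx; rewrite in_sd;
  by case: (x \in A); case: (x \in B); case: (y \in A).
have Hcard : forall x, x \in symdiff A B -> (#|symdiff A B :\ x|).+1 = #|symdiff A B|.
  by move=> x Hx; rewrite (cardsD1 x (symdiff A B)) Hx.
have H1 : forall x, #|symdiff A (symdiff A [set x])| = 1.
  move=> x; apply/eqP/cards1P; exists x; apply/setP=> y; rewrite !(in_sd, inE).
  by case: (y \in A); case: (y == x).
case: (set_0Vmem (B :\: A)) => [/eqP|[x]].
  rewrite setD_eq0 => BA.
  have [x xAB] : exists x, x \in A :\: B.
    case: (set_0Vmem (A :\: B)) => [/eqP|[x Hx]]; last by exists x.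
    by rewrite setD_eq0 => AB; case/negP: nAB; rewrite eqEsubset AB BA.
  have xs : x \in symdiff A B by rewrite in_sd; move: xAB; rewrite inE => /andP[/negbTE -> ->].
  exists (symdiff A [set x]); split; rewrite ?Hc ?Hcard ?H1 //.
  apply: (up _ UB); apply/subsetP => y yB; rewrite in_sd inE (subsetP BA) //=.
  by case: (y =P x) => // E; move: xAB; rewrite inE -E yB.
move=> xBA.
have xs : x \in symdiff A B by rewrite in_sd; move: xBA; rewrite inE => /andP[/negbTE -> ->].
exists (symdiff A [set x]); split; rewrite ?Hc ?Hcard ?H1 //.
apply: (up _ UA); apply/subsetP => y yA; rewrite in_sd inE yA.
by case: (y =P x) => // E; move: xBA; rewrite inE -E yA.
Qed.

Lemma aut_adj (p : {perm TARv X e}) a b : p \in TARaut X e -> tar_adj (p a) (p b) = tar_adj a b.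
Proof. by rewrite inE => /forallP /(_ a) /forallP /(_ b) /eqP. Qed.

Lemma dist_le (p : {perm TARv X e}) : p \in TARaut X e -> forall n a b,
  #|symdiff (val a) (val b)| <= n -> #|symdiff (val (p a)) (val (p b))| <= n.
Proof.
move=> Hp; elim=> [|n IH] a b.
  rewrite leqn0 cards_eq0 sd0P => /eqP /val_inj ->.
  by rewrite leqn0 cards_eq0 sd0P.
case: (eqVneq (val a) (val b)) => [/val_inj -> _|nab].
  by apply: leq_trans (_ : 0 <= _) => //; rewrite leqn0 cards_eq0 sd0P.
case: (neighbour (valP a) (valP b) nab) => C [UC H1 H2] Hn.
pose c : TARv X e := exist _ C UC.
apply: leq_trans (sd_tri _ _ (val (p c))) _.
have -> : #|symdiff (val (p a)) (val (p c))| = 1.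
  by apply/eqP; move: (aut_adj a c Hp); rewrite /tar_adj => ->; apply/eqP.
rewrite add1n ltnS; apply: IH => /=.
by rewrite -ltnS H2.
Qed.


Lemma grpA : group_set (TARaut X e).
Proof.
apply/group_setP; split.
  by rewrite inE; apply/forallP=> a; apply/forallP=> b; rewrite !perm1.
move=> x y Hx Hy; rewrite inE; apply/forallP=> a; apply/forallP=> b.
by rewrite !permM (aut_adj _ _ Hy) (aut_adj _ _ Hx).
Qed.

Lemma dist_eq (p : {perm TARv X e}) a b : p \in TARaut X e ->
  #|symdiff (val (p a)) (val (p b))| = #|symdiff (val a) (val b)|.
Proof.
move=> Hp; apply/eqP; rewrite eqn_leq (dist_le Hp) //=.
have Hi : (p^-1)%g \in TARaut X e by rewrite (@groupV _ (Group grpA)).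
by move: (dist_le Hi (leqnn #|symdiff (val (p a)) (val (p b))|)); rewrite !permK.
Qed.

Definition D1 x := U (setT :\ x).

Lemma core v A : ~~ D1 v -> U A -> v \in A.
Proof.
move=> nD UA; apply/negPn/negP=> vA; case/negP: nD; apply: (up _ UA).
by apply/subsetP=> y yA; rewrite !inE andbT; apply/eqP=> E; move: vA; rewrite -E yA.
Qed.

Lemma sd_D1 A B x : U A -> U B -> x \in symdiff A B -> D1 x.
Proof.
move=> UA UB; rewrite in_sd; apply: contraTT => nD.
by rewrite (core nD UA) (core nD UB).
Qed.

Section Perm.
Variable p : {perm TARv X e}.
Hypothesis Hp : p \in TARaut X e.

Definition a0 : TARv X e := exist _ setT UT.
Definition P A := val (p (insubd a0 A)).

Lemma F1 A : U (P A).
Proof. exact: valP. Qed.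

Lemma F2 A B : U A -> U B -> #|symdiff (P A) (P B)| = #|symdiff A B|.
Proof.
move=> UA UB; rewrite /P dist_eq // !insubdK //.
Qed.

Lemma F3 B : U B -> exists A, U A /\ P A = B.
Proof.
move=> UB; exists (val ((p^-1)%g (insubd a0 B))); split; first exact: valP.
by rewrite /P valKd permKV insubdK.
Qed.

Lemma Pval a : P (val a) = val (p a).
Proof. by rewrite /P valKd. Qed.

Definition C0 := P setT.

Lemma single x : D1 x -> #|symdiff (P (setT :\ x)) C0| = 1.
Proof.
move=> Dx; rewrite /C0 F2 //; last exact: UT.
apply/eqP/cards1P; exists x; apply/setP=> y; rewrite !(in_sd, inE) andbT.
by case: (y == x).
Qed.

Definition sig x := if D1 x then odflt x [pick y in symdiff (P (setT :\ x)) C0] else x.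

Lemma sigE x : D1 x -> symdiff (P (setT :\ x)) C0 = [set sig x].
Proof.
move=> Dx; move/eqP/cards1P: (single Dx) => [y Hy].
rewrite /sig Dx Hy; case: pickP => [z|/(_ y)]; first by rewrite inE => /eqP ->.
by rewrite inE eqxx.
Qed.

Lemma sigD1 x : D1 x -> D1 (sig x).
Proof.
move=> Dx; apply: (sd_D1 (F1 (setT :\ x)) (F1 setT)).
by rewrite -/C0 sigE // set11.
Qed.

Lemma sig_inj : injective sig.
Proof.
move=> x y.
case Dx: (D1 x); case Dy: (D1 y).
- move=> E; have : symdiff (P (setT :\ x)) C0 = symdiff (P (setT :\ y)) C0.
    by rewrite !sigE // E.
  move/sdinj => E2; move: (F2 Dx Dy); rewrite E2.
  have -> : symdiff (P (setT :\ y)) (P (setT :\ y)) = set0.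
    by apply/eqP; rewrite sd0P.
  rewrite cards0 => /esym/eqP; rewrite cards_eq0 sd0P => /eqP/setP/(_ x).
  rewrite !inE eqxx andbT /=; by case: (x =P y).
- move=> E; move: (sigD1 Dx); rewrite E /sig Dy Dy //.
- move=> E; move: (sigD1 Dy); rewrite -E /sig Dx Dx //.
- by rewrite /sig Dx Dy.
Qed.

Definition q := perm sig_inj.

Lemma key A x : U A -> x \notin A -> sig x \in symdiff (P A) C0.
Proof.
move=> UA xA.
have Dx : D1 x by apply: (up _ UA); apply/subsetP=> y yA; rewrite !inE andbT; apply/eqP=> E; move: xA; rewrite -E yA.
apply/negPn/negP=> nY.
have E : symdiff (P A) (P (setT :\ x)) = sig x |: symdiff (P A) C0.
  rewrite -(sd3 _ _ C0) sigE //; apply/setP=> y; rewrite !(in_sd, inE).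
  case: (y =P sig x) => [->|_]; last by case: (y \in P A); case: (y \in C0).
  by move: nY; rewrite in_sd; case: (sig x \in P A); case: (sig x \in C0).
move: (F2 UA Dx); rewrite E cardsU1 nY add1n.
rewrite /C0 F2 //; last exact: UT.
move=> H; have : #|symdiff A (setT :\ x)| <= #|symdiff A setT|.
  apply: subset_leq_card; apply/subsetP=> y; rewrite !(in_sd, inE) andbT.
  by case: (y =P x) => [->|]; [rewrite (negbTE xA) | case: (y \in A)].
by rewrite -H ltnn.
Qed.

Lemma Y_eq A : U A -> symdiff (P A) C0 = q @: (~: A).
Proof.
move=> UA.
have -> : q @: (~: A) = sig @: (~: A) by apply: eq_imset => x; rewrite permE.
apply/esym/eqP; rewrite eqEcard; apply/andP; split.
  by apply/subsetP=> y /imsetP [x]; rewrite inE => xA ->; apply: key.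
rewrite card_imset; last exact: sig_inj.
by rewrite /C0 F2 // ?sdT //; exact: UT.
Qed.

Definition R0 := ~: C0.

Lemma PA_eq A : U A -> P A = symdiff (q @: A) R0.
Proof.
move=> UA; rewrite -(sdK (P A) C0) Y_eq //; apply/setP=> y.
rewrite !(in_sd, mem_qim, inE); by case: (_ \in A); case: (y \in C0).
Qed.

Lemma G1 A y : U A -> y \in A -> q y \in R0 -> U (A :\ y).
Proof.
move=> UA yA qyR.
have H : U (symdiff (q @: (A :\ y)) R0).
  apply: (up _ (F1 A)); rewrite PA_eq //; apply/subsetP=> z.
  rewrite !(in_sd, mem_qim, inE).
  case: (z =P q y) => [->|nz]; first by rewrite permK yA; move: qyR; rewrite inE => ->.
  have -> : (q^-1)%g z != y by apply/eqP=> E; apply: nz; rewrite -E permKV.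
  by [].
case: (F3 H) => A' [UA' E]; rewrite PA_eq // in E.
by move/sdinj/(imset_inj perm_inj): E => <-.
Qed.

Lemma G2 A : U A -> U (q @: A).
Proof.
move=> UA.
pose R' := [set y | q y \in R0].
have HR' : irrelevant_set X e R'.
  apply/forall_inP=> v; rewrite inE => qv; apply/forallP=> S; apply/implyP=> /minsetP [US Smin].
  apply/negP=> vS; have := Smin _ (G1 US vS qv) (subsetDl _ _).
  by move/setP/(_ v); rewrite !inE eqxx vS.
have U2 := conj1 HR' UA.
have -> : q @: A = P (symdiff A R').
  rewrite PA_eq //; apply/setP=> z; rewrite !(in_sd, mem_qim, inE) permKV.
  by case: (_ \in A); case: (z \in C0).
exact: F1.
Qed.

Lemma G3 B : U B -> exists A, U A /\ q @: A = B.
Proof.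
move=> UB; pose SU := [set S : {set T} | U S].
have sub : ((fun S : {set T} => q @: S) @: SU) \subset SU.
  apply/subsetP=> Z /imsetP [S]; rewrite !inE => US ->; exact: G2.
have : ((fun S : {set T} => q @: S) @: SU) == SU.
  rewrite eqEcard sub card_imset ?leqnn //; exact: (imset_inj perm_inj).
move/eqP=> E; have : B \in SU by rewrite inE.
by rewrite -E => /imsetP [A]; rewrite inE => UA ->; exists A.
Qed.

Lemma G4 : q \in MX X e.
Proof.
rewrite inE; apply/forallP=> M; apply/implyP=> /minsetP [UM Mmin].
rewrite card_imset ?eqxx ?andbT; last exact: perm_inj.
apply/minsetP; split; first exact: G2.
move=> B UB BM; case: (G3 UB) => A [UA E]; subst B.
have AM : A \subset M.
  apply/subsetP=> x xA.
  by have := subsetP BM (q x) (imset_f _ xA); rewrite mem_qim permK.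
by rewrite (Mmin A UA AM).
Qed.

Lemma G5 : irrelevant_set X e R0.
Proof.
apply/forall_inP=> v vR; apply/forallP=> M; apply/implyP=> /minsetP [UM Mmin].
apply/negP=> vM; case: (G3 UM) => A [UA E].
have yA : (q^-1)%g v \in A by rewrite -mem_qim E.
have := G1 UA yA; rewrite permKV => /(_ vR) /G2 H.
have E2 : q @: (A :\ (q^-1)%g v) = M :\ v.
  apply/setP=> z; rewrite !(mem_qim, inE) -E mem_qim.
  by rewrite (inj_eq perm_inj).
rewrite E2 in H; have := Mmin _ H (subsetDl _ _).
by move/setP/(_ v); rewrite !inE eqxx vM.
Qed.

Definition f1 (a : TARv X e) : TARv X e := Sub (q @: val a) (G2 (valP a)).
Lemma f1_inj : injective f1.
Proof. by move=> a b /(congr1 val) /= /(imset_inj perm_inj) /val_inj. Qed.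
Definition fR (a : TARv X e) : TARv X e := Sub (symdiff (val a) R0) (conj1 G5 (valP a)).
Lemma fR_inj : injective fR.
Proof. by move=> a b /(congr1 val) /= /sdinj /val_inj. Qed.

Lemma aut_in_gen : p \in <<TARgens X e>>%g.
Proof.
have -> : p = (perm f1_inj * perm fR_inj)%g.
  apply/permP=> a; rewrite permM !permE; apply: val_inj => /=.
  by rewrite -PA_eq ?Pval //; exact: valP.
rewrite groupM // mem_gen // inE.
  apply/orP; right; apply/existsP; exists q; rewrite G4 /=.
  by apply/forallP=> a; rewrite permE.
apply/orP; left; apply/existsP; exists R0; rewrite G5 /=.
by apply/forallP=> a; rewrite permE.
Qed.

End Perm.

Lemma gens_sub : TARgens X e \subset TARaut X e.
Proof.
apply/subsetP=> g; rewrite !inE => /orP [/existsP [R /andP [_ /forallP H]] | /existsP [r /andP [_ /forallP H]]];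
  apply/forallP=> a; apply/forallP=> b; rewrite /tar_adj (eqP (H a)) (eqP (H b)).
  by rewrite sd3.
by rewrite sd_qim card_imset //; exact: perm_inj.
Qed.

Lemma main3 : TARaut X e = <<TARgens X e>>%g.
Proof.
apply/eqP; rewrite eqEsubset; apply/andP; split.
  by apply/subsetP=> p Hp; exact: aut_in_gen.
by rewrite -[TARaut X e]/(gval (Group grpA)) gen_subG gens_sub.
Qed.

End Main.

Theorem theorem2p27 (X : Xparam) (T : finType) (e : rel T) :
  robust_param X -> simple_graph e ->
  (Xnum X K1rel = 0 \/ no_isolated e) ->
  (forall R : {set T}, irrelevant_set X e R ->
     forall S : {set T}, X T e S -> X T e (symdiff S R)) /\
  (forall q : {perm T}, q \in MX X e ->
     forall S : {set T}, X T e S -> X T e (q @: S)) /\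
  TARaut X e = <<TARgens X e>>%g.
Proof.
move=> [HX _] Hg _; split; last split.
- by move=> R HR S HS; apply: conj1.
- by move=> q Hq S HS; apply: conj2.
- exact: main3.
Qed.
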